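(* Let $p\ge 1$ and let $w(0),\ldots,w(p)$ be positive weights. For $p\times p$ orthogonal projectors $P_1,P_2$ (i.e. real matrices with $P_i=P_i'=P_i^2$, where the zero matrix is allowed as a projector of rank $0$) with ranks $k_1,k_2\in\{0,\ldots,p\}$, define \[ D_w^2(P_1,P_2)=\tfrac12\,\|w(k_1)P_1-w(k_2)P_2\|^2, \] where $\|\cdot\|$ is the Frobenius norm, and $D_w(P_1,P_2)\ge 0$ its square root. Then for every choice of positive weights $w$, $D_w$ is a metric on the set of $p\times p$ orthogonal projectors. Moreover, with \[ m(k_1,k_2)=\frac{w^2(k_1)k_1+w^2(k_2)k_2}{2}, \] for all orthogonal projectors $P_1,P_2$ of ranks $k_1,k_2$, \[ m(k_1,k_2)-w(k_1)w(k_2)\min\{k_1,k_2\}\;\le\; D_w^2(P_1,P_2)\;\le\; m(k_1,k_2)+w(k_1)w(k_2)\min\{p-k_1-k_2,0\}, \] and these bounds are sharp, i.e. for given $k_1,k_2$ each bound is attained by some pair of orthogonal projectors of ranks $k_1,k_2$.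
   Context: An orthogonal projector is a $p\times p$ real matrix $P$ with $P=P'=P^2$; its rank equals its trace. The Frobenius norm is $\|A\|^2=\mathrm{tr}(A'A)$. *)

(* Defs.v *)
From mathcomp Require Import all_boot all_order all_algebra.
From mathcomp Require Import reals.
Set Implicit Arguments. Unset Strict Implicit. Unset Printing Implicit Defensive.
Import Order.TTheory GRing.Theory Num.Theory.
Local Open Scope ring_scope.

Definition is_proj (R : realType) (p : nat) (P : 'M[R]_p) : Prop :=
  P^T = P /\ P *m P = P.

Definition frob2 (R : realType) (p : nat) (A : 'M[R]_p) : R := \tr (A^T *m A).

Definition Dw2 (R : realType) (p : nat) (w : nat -> R) (P1 P2 : 'M[R]_p) : R :=
  2^-1 * frob2 (w (\rank P1) *: P1 - w (\rank P2) *: P2).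

Definition Dw (R : realType) (p : nat) (w : nat -> R) (P1 P2 : 'M[R]_p) : R :=
  Num.sqrt (Dw2 w P1 P2).

Definition mw (R : realType) (w : nat -> R) (k1 k2 : nat) : R :=
  (w k1 ^+ 2 * k1%:R + w k2 ^+ 2 * k2%:R) / 2.

Definition lower_bd (R : realType) (w : nat -> R) (k1 k2 : nat) : R :=
  mw w k1 k2 - w k1 * w k2 * (minn k1 k2)%:R.

Definition upper_bd (R : realType) (p : nat) (w : nat -> R) (k1 k2 : nat) : R :=
  mw w k1 k2 + w k1 * w k2 * Num.min (p%:R - k1%:R - k2%:R) 0.

(* Main.v *)
Require Import Defs.
From mathcomp Require Import all_boot all_order all_algebra.
From mathcomp Require Import reals.
From mathcomp Require Import ring lra zify.
Import Order.TTheory GRing.Theory Num.Theory.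
Local Open Scope ring_scope.

Lemma tr_idem (R : realType) (p : nat) (P : 'M[R]_p) :
  P *m P = P -> \tr P = (\rank P)%:R.
Proof.
move=> PP.
move: (mulmx_base P) (col_base_full P) (row_base_free P).
move: (col_base P) (row_base P) => C B eP Cf Bf.
have h : C *m ((B *m C) *m B) = C *m (1%:M *m B).
  by rewrite mul1mx !mulmxA eP -mulmxA eP PP.
have h1 := row_full_inj Cf h.
have h2 : B *m C = 1%:M.
  by apply: (row_free_inj Bf); rewrite h1.
have -> : \tr P = \tr (C *m B) by rewrite eP.
by rewrite mxtrace_mulC h2 mxtrace1.
Qed.
Arguments tr_idem {R p}.

Definition ip (R : realType) (p : nat) (A B : 'M[R]_p) : R := \tr (A^T *m B).
Arguments ip {R p}.

Lemma frob2E (R : realType) (p : nat) (A : 'M[R]_p) :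
  frob2 A = \sum_i \sum_j A j i ^+ 2.
Proof.
rewrite /frob2 /mxtrace; apply: eq_bigr => i _; rewrite mxE.
by apply: eq_bigr => j _; rewrite mxE expr2.
Qed.
Arguments frob2E {R p}.

Lemma frob2_ge0 (R : realType) (p : nat) (A : 'M[R]_p) : 0 <= frob2 A.
Proof.
rewrite frob2E; apply: sumr_ge0 => i _; apply: sumr_ge0 => j _.
exact: sqr_ge0.
Qed.
Arguments frob2_ge0 {R p}.

Lemma frob2_eq0 (R : realType) (p : nat) (A : 'M[R]_p) : frob2 A = 0 -> A = 0.
Proof.
rewrite frob2E => /eqP; rewrite psumr_eq0; last first.
  by move=> i _; apply: sumr_ge0 => j _; exact: sqr_ge0.
move=> /allP H; apply/matrixP => j i; rewrite mxE.
have := H i (mem_index_enum i) => /=; rewrite psumr_eq0; last first.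
  by move=> k _; exact: sqr_ge0.
move=> /allP H2; have := H2 j (mem_index_enum j) => /=.
by rewrite sqrf_eq0 => /eqP.
Qed.
Arguments frob2_eq0 {R p}.

Lemma ipC (R : realType) (p : nat) (A B : 'M[R]_p) : ip A B = ip B A.
Proof. by rewrite /ip -mxtrace_tr trmx_mul trmxK. Qed.
Arguments ipC {R p}.

Lemma frob2_lin (R : realType) (p : nat) (a b : R) (A B : 'M[R]_p) :
  frob2 (a *: A + b *: B) = a ^+ 2 * frob2 A + 2 * a * b * ip A B + b ^+ 2 * frob2 B.
Proof.
rewrite /frob2.
have -> : (a *: A + b *: B)^T = a *: A^T + b *: B^T by rewrite linearD !linearZ.
rewrite mulmxDl !mulmxDr -!scalemxAl -!scalemxAr.
rewrite !mxtraceD !mxtraceZ.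
have -> : \tr (B^T *m A) = ip A B by rewrite ipC.
rewrite /ip; ring.
Qed.
Arguments frob2_lin {R p}.

Lemma ip_le (R : realType) (p : nat) (A B : 'M[R]_p) :
  ip A B <= Num.sqrt (frob2 A) * Num.sqrt (frob2 B).
Proof.
set a := Num.sqrt (frob2 A); set b := Num.sqrt (frob2 B).
have ha : a ^+ 2 = frob2 A by rewrite sqr_sqrtr // frob2_ge0.
have hb : b ^+ 2 = frob2 B by rewrite sqr_sqrtr // frob2_ge0.
have a0 : 0 <= a by exact: sqrtr_ge0.
have b0 : 0 <= b by exact: sqrtr_ge0.
have [az|anz] := eqVneq a 0.
  have : frob2 A = 0 by rewrite -ha az expr0n.
  move/frob2_eq0 => ->; rewrite /ip trmx0 mul0mx mxtrace0.
  by rewrite mulr_ge0.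
have [bz|bnz] := eqVneq b 0.
  have : frob2 B = 0 by rewrite -hb bz expr0n.
  move/frob2_eq0 => ->; rewrite /ip mulmx0 mxtrace0.
  by rewrite mulr_ge0.
have ap : 0 < a by rewrite lt_def anz.
have bp : 0 < b by rewrite lt_def bnz.
have := frob2_ge0 (b *: A + (- a) *: B).
rewrite frob2_lin -ha -hb => H.
have hab : 0 < a * b by rewrite mulr_gt0.
have : 2 * (a * b) * ip A B <= 2 * (a * b) * (a * b) by nra.
by rewrite ler_pM2l ?mulr_gt0.
Qed.
Arguments ip_le {R p}.

Lemma frob2_tri (R : realType) (p : nat) (X Y : 'M[R]_p) :
  Num.sqrt (frob2 (X + Y)) <= Num.sqrt (frob2 X) + Num.sqrt (frob2 Y).
Proof.
have := frob2_lin 1 1 X Y; rewrite !scale1r => ->.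
have hc := ip_le X Y.
set a := Num.sqrt (frob2 X) in hc *; set b := Num.sqrt (frob2 Y) in hc *.
have ha : a ^+ 2 = frob2 X by rewrite sqr_sqrtr // frob2_ge0.
have hb : b ^+ 2 = frob2 Y by rewrite sqr_sqrtr // frob2_ge0.
have a0 : 0 <= a by exact: sqrtr_ge0.
have b0 : 0 <= b by exact: sqrtr_ge0.
rewrite -ha -hb.
have -> : a + b = Num.sqrt ((a + b) ^+ 2) by rewrite sqrtr_sqr ger0_norm ?addr_ge0.
apply: ler_wsqrtr; nra.
Qed.
Arguments frob2_tri {R p}.

Lemma proj_tr (R : realType) (p : nat) (P : 'M[R]_p) :
  is_proj P -> \tr P = (\rank P)%:R.
Proof. by case=> _ /tr_idem. Qed.
Arguments proj_tr {R p}.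

Lemma proj_frob (R : realType) (p : nat) (P : 'M[R]_p) :
  is_proj P -> frob2 P = \tr P.
Proof. by case=> tP PP; rewrite /frob2 tP PP. Qed.
Arguments proj_frob {R p}.

Lemma Dw2_formula (R : realType) (p : nat) (w : nat -> R) (P1 P2 : 'M[R]_p) :
  is_proj P1 -> is_proj P2 ->
  Dw2 w P1 P2 = mw w (\rank P1) (\rank P2)
      - w (\rank P1) * w (\rank P2) * \tr (P1 *m P2).
Proof.
move=> h1 h2; rewrite /Dw2 -scaleNr frob2_lin !proj_frob // (proj_tr P1 h1) (proj_tr P2 h2).
have -> : ip P1 P2 = \tr (P1 *m P2) by rewrite /ip; case: h1 => ->.
by rewrite /mw; field.
Qed.
Arguments Dw2_formula {R p}.

Lemma proj_trPQ_ge0 (R : realType) (p : nat) (P Q : 'M[R]_p) :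
  is_proj P -> is_proj Q -> 0 <= \tr (P *m Q).
Proof.
move=> [tP PP] [tQ QQ].
have <- : frob2 (Q *m P) = \tr (P *m Q).
  rewrite /frob2 trmx_mul tP tQ mulmxA -(mulmxA P Q Q) QQ.
  by rewrite mxtrace_mulC mulmxA PP.
exact: frob2_ge0.
Qed.
Arguments proj_trPQ_ge0 {R p}.

Lemma proj_compl (R : realType) (p : nat) (P : 'M[R]_p) :
  is_proj P -> is_proj (1%:M - P).
Proof.
move=> [tP PP]; split; first by rewrite linearB /= trmx1 tP.
by rewrite mulmxBl mul1mx mulmxBr mulmx1 PP subrr subr0.
Qed.
Arguments proj_compl {R p}.

Lemma tr_bounds (R : realType) (p : nat) (P Q : 'M[R]_p) :
  is_proj P -> is_proj Q ->
  [/\ 0 <= \tr (P *m Q), \tr (P *m Q) <= (\rank P)%:R,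
      \tr (P *m Q) <= (\rank Q)%:R &
      (\rank P)%:R + (\rank Q)%:R - p%:R <= \tr (P *m Q)].
Proof.
move=> hP hQ.
have hPQ : \tr (Q *m P) = \tr (P *m Q) by rewrite mxtrace_mulC.
have e1 := proj_trPQ_ge0 P (1%:M - Q) hP (proj_compl Q hQ).
have e2 := proj_trPQ_ge0 Q (1%:M - P) hQ (proj_compl P hP).
have e3 := proj_trPQ_ge0 (1%:M - P) (1%:M - Q) (proj_compl P hP) (proj_compl Q hQ).
rewrite mulmxBr mulmx1 raddfB /= (proj_tr P hP) in e1.
rewrite mulmxBr mulmx1 raddfB /= (proj_tr Q hQ) hPQ in e2.
rewrite mulmxBr mulmx1 !mulmxBl !mul1mx !raddfB /= mxtrace1 (proj_tr P hP) (proj_tr Q hQ) in e3.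
split; [exact: proj_trPQ_ge0 | lra | lra | lra].
Qed.
Arguments tr_bounds {R p}.

Lemma pid_proj (R : realType) (p k : nat) : (k <= p)%N -> is_proj (pid_mx k : 'M[R]_p).
Proof. by move=> kp; split; [exact: tr_pid_mx | exact: pid_mx_id]. Qed.
Arguments pid_proj {R p k}.

Lemma rk_pid (R : realType) (p k : nat) : (k <= p)%N -> \rank (pid_mx k : 'M[R]_p) = k.
Proof. by move=> h; exact: rank_pid_mx. Qed.
Arguments rk_pid {R p k}.

Lemma frob2N (R : realType) (p : nat) (A : 'M[R]_p) : frob2 (- A) = frob2 A.
Proof. rewrite /frob2; have -> : (- A)^T = - A^T by rewrite linearN. by rewrite mulNmx mulmxN opprK. Qed.
Arguments frob2N {R p}.

Theorem proposition2p1 (R : realType) (p : nat) (w : nat -> R) :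
  (1 <= p)%N ->
  (forall k : nat, (k <= p)%N -> 0 < w k) ->
  (* D_w is a metric on the set of p x p orthogonal projectors *)
  ((forall P1 P2 : 'M[R]_p, is_proj P1 -> is_proj P2 -> 0 <= Dw w P1 P2) /\
   (forall P1 P2 : 'M[R]_p, is_proj P1 -> is_proj P2 ->
      (Dw w P1 P2 = 0 <-> P1 = P2)) /\
   (forall P1 P2 : 'M[R]_p, is_proj P1 -> is_proj P2 ->
      Dw w P1 P2 = Dw w P2 P1) /\
   (forall P1 P2 P3 : 'M[R]_p, is_proj P1 -> is_proj P2 -> is_proj P3 ->
      Dw w P1 P3 <= Dw w P1 P2 + Dw w P2 P3)) /\
  (* bounds *)
  (forall P1 P2 : 'M[R]_p, is_proj P1 -> is_proj P2 ->
     lower_bd w (\rank P1) (\rank P2) <= Dw2 w P1 P2 /\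
     Dw2 w P1 P2 <= upper_bd p w (\rank P1) (\rank P2)) /\
  (* sharpness *)
  (forall k1 k2 : nat, (k1 <= p)%N -> (k2 <= p)%N ->
     (exists P1 P2 : 'M[R]_p, [/\ is_proj P1, is_proj P2, \rank P1 = k1,
        \rank P2 = k2 & Dw2 w P1 P2 = lower_bd w k1 k2]) /\
     (exists P1 P2 : 'M[R]_p, [/\ is_proj P1, is_proj P2, \rank P1 = k1,
        \rank P2 = k2 & Dw2 w P1 P2 = upper_bd p w k1 k2])).
Proof.
move=> p1 wpos.
have wr : forall P : 'M[R]_p, 0 < w (\rank P) by move=> P; apply: wpos; exact: rank_leq_row.
split; [split; [|split; [|split]] | split].
- by move=> P1 P2 _ _; exact: sqrtr_ge0.
- move=> P1 P2 h1 h2; split; last first.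
    by move=> ->; rewrite /Dw /Dw2 subrr /frob2 trmx0 mul0mx mxtrace0 mulr0 sqrtr0.
  move=> /eqP; rewrite sqrtr_eq0 /Dw2 => H.
  have H0 : frob2 (w (\rank P1) *: P1 - w (\rank P2) *: P2) = 0.
    apply/eqP; rewrite eq_le frob2_ge0 andbT.
    have := H; rewrite pmulr_rle0 // invr_gt0; lra.
  move/frob2_eq0/eqP: H0; rewrite subr_eq0 => /eqP E.
  have w1 := wr P1; have w2 := wr P2.
  have rk : \rank P1 = \rank P2.
    by rewrite -(mxrank_scale_nz P1 (lt0r_neq0 w1)) E mxrank_scale_nz // lt0r_neq0.
  rewrite rk in E.
  exact: (scalerI (lt0r_neq0 w2) E).
- move=> P1 P2 _ _; rewrite /Dw /Dw2 -opprB frob2N //.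
- move=> P1 P2 P3 _ _ _; rewrite /Dw /Dw2.
  have h2 : 0 <= 2^-1 :> R by rewrite invr_ge0 ler0n.
  rewrite !sqrtrM // -mulrDr; apply: ler_wpM2l; first exact: sqrtr_ge0.
  set Q1 := w (\rank P1) *: P1; set Q2 := w (\rank P2) *: P2; set Q3 := w (\rank P3) *: P3.
  have -> : Q1 - Q3 = (Q1 - Q2) + (Q2 - Q3) by rewrite addrA subrK.
  exact: frob2_tri.
- move=> P1 P2 h1 h2; rewrite Dw2_formula //.
  have [t0 t1 t2 t3] := tr_bounds P1 P2 h1 h2.
  have hw : 0 < w (\rank P1) * w (\rank P2) by rewrite mulr_gt0.
  set t := \tr (P1 *m P2) in t0 t1 t2 t3 *.
  set a := w (\rank P1) * w (\rank P2) in hw *.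
  rewrite /lower_bd /upper_bd; split.
    have hm : t <= (minn (\rank P1) (\rank P2))%:R.
      by case: (leqP (\rank P1) (\rank P2)) => _; [exact: t1 | exact: t2].
    by rewrite lerD2l lerN2; apply: ler_wpM2l => //; exact: ltW.
  have hm : - t <= Num.min (p%:R - (\rank P1)%:R - (\rank P2)%:R) 0.
    by rewrite le_min; apply/andP; split; lra.
  by rewrite lerD2l -mulrN; apply: ler_wpM2l => //; exact: ltW.
- move=> k1 k2 hk1 hk2.
  have trpid : forall k, (k <= p)%N -> \tr (pid_mx k : 'M[R]_p) = k%:R.
    by move=> k hk; rewrite (proj_tr _ (pid_proj hk)); congr _%:R; exact: rk_pid.
  split.
    exists (pid_mx k1), (pid_mx k2); split; try exact: pid_proj; try exact: rk_pid.
    rewrite (Dw2_formula w _ _ (pid_proj hk1) (pid_proj hk2)) (rk_pid hk1) (rk_pid hk2) mul_pid_mx.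
    rewrite (minn_idPr (leq_trans (geq_minl k1 k2) hk1)) trpid //.
    exact: leq_trans (geq_minl k1 k2) hk1.
  have hk2' : (p - k2 <= p)%N by exact: leq_subr.
  have cp : is_proj (1%:M - pid_mx (p - k2) : 'M[R]_p) by exact: proj_compl (pid_proj hk2').
  have rc : \rank (1%:M - pid_mx (p - k2) : 'M[R]_p) = k2.
    by have := rank_copid_mx R hk2'; rewrite /copid_mx subKn.
  exists (pid_mx k1), (1%:M - pid_mx (p - k2)); split; try exact: pid_proj; try done.
    exact: rk_pid.
  rewrite (Dw2_formula w _ _ (pid_proj hk1) cp) rc (rk_pid hk1) mulmxBr mulmx1 mul_pid_mx raddfB /=.
  have hmin : (minn k1 (p - k2) <= p)%N by exact: leq_trans (geq_minl _ _) hk1.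
  rewrite (minn_idPr hmin) !trpid //.
  rewrite /upper_bd; congr (_ + _).
  rewrite -mulrN; congr (_ * _).
  case: (leqP k1 (p - k2)) => h.
    rewrite subrr oppr0 min_r //.
    have : (k1 + k2 <= p)%N by lia.
    rewrite -(ler_nat R) natrD => H; lra.
  rewrite natrB // min_l; first lra.
  have : (p < k1 + k2)%N by lia.
  rewrite -(ltr_nat R) natrD => H; lra.
Qed.
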